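(* Let $G=(V,E)$ be a cograph and let $\sigma:V\to S$ be an hc-coloring of $G$. Then $|S|=\chi(G)$.
   Context: All graphs are finite, simple and undirected. A (proper vertex) coloring of $G=(V,E)$ is a surjective map $\sigma:V\to S$ such that $xy\in E$ implies $\sigma(x)\neq\sigma(y)$; $\chi(G)$ is the chromatic number. A cograph is a graph that is $K_1$, or a disjoint union of cographs, or a join of cographs. A cotree $(T,t)$ of a cograph $G$ is a rooted tree $T$ whose leaf set is $V$, together with a labeling $t:V^0(T)\to\{0,1\}$ of its inner vertices, such that for every inner vertex $u$ the induced subgraph $G(u):=G[L(T(u))]$ (where $L(T(u))$ is the set of leaves descending from $u$) is the disjoint union (if $t(u)=0$) or the join (if $t(u)=1$) of the graphs $G(v)$, $v$ a child of $u$. The cotree is binary if every inner vertex has exactly two children. A coloring $\sigma$ of $G$ is an hc-coloring with respect to a binary cotree $(T,t)$ if for every inner vertex $u$ of $T$ with children $v_1,v_2$: if $t(u)=1$ then $\sigma(L(T(v_1)))\cap\sigma(L(T(v_2)))=\emptyset$, and if $t(u)=0$ then $\sigma(L(T(v_1)))\cap\sigma(L(T(v_2)))\in\{\sigma(L(T(v_1))),\sigma(L(T(v_2)))\}$ (i.e., one of the two color sets contains the other). A coloring $\sigma$ of a cograph $G$ is an hc-coloring of $G$ if there exists a binary cotree $(T,t)$ of $G$ such that $\sigma$ is an hc-coloring with respect to $(T,t)$. *)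

(* Defs.v *)
From mathcomp Require Import all_boot.
Set Implicit Arguments. Unset Strict Implicit. Unset Printing Implicit Defensive.

Section Graphs.
Variable T : finType.

(* A finite simple undirected graph on vertex set T is a symmetric
   irreflexive relation e : rel T (hypotheses stated in the theorem). *)

Definition proper_coloring (S : Type) (e : rel T) (sigma : T -> S) : Prop :=
  forall x y, e x y -> sigma x <> sigma y.

Definition surjective_map (S : Type) (sigma : T -> S) : Prop :=
  forall c : S, exists x, sigma x = c.

Definition colorable (e : rel T) (n : nat) : bool :=
  [exists f : {ffun T -> 'I_n}, [forall x, forall y, e x y ==> (f x != f y)]].

Lemma colorable_card (e : rel T) : irreflexive e -> exists n, colorable e n.
Proof.
move=> irr; exists #|T|; apply/existsP; exists [ffun x => enum_rank x].
apply/forallP=> x; apply/forallP=> y; apply/implyP=> exy; rewrite !ffunE.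
apply/negP=> /eqP/enum_rank_inj exy'; by rewrite exy' irr in exy.
Qed.

Definition chi (e : rel T) (irr : irreflexive e) : nat :=
  ex_minn (colorable_card irr).

(* Cographs: K_1, or disjoint union, or join of cographs (binary form; the
   n-ary union/join is an iteration of the binary one), stated for induced
   subgraphs G[A]. *)
Inductive cograph_on (e : rel T) : {set T} -> Prop :=
| cograph_K1 x : cograph_on e [set x]
| cograph_union A B : cograph_on e A -> cograph_on e B -> [disjoint A & B] ->
    (forall x y, x \in A -> y \in B -> ~~ e x y) -> cograph_on e (A :|: B)
| cograph_join A B : cograph_on e A -> cograph_on e B -> [disjoint A & B] ->
    (forall x y, x \in A -> y \in B -> e x y) -> cograph_on e (A :|: B).

Definition cograph (e : rel T) : Prop := cograph_on e [set: T].

(* Binary rooted trees with leaves labelled by vertices and inner vertices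
   labelled by t(u) : bool (false = 0 = disjoint union, true = 1 = join). *)
Inductive btree : Type :=
| Leaf of T
| Node of bool & btree & btree.

Fixpoint leaves (t : btree) : seq T :=
  match t with
  | Leaf x => [:: x]
  | Node _ l r => leaves l ++ leaves r
  end.

Fixpoint cotree_labels_ok (e : rel T) (t : btree) : bool :=
  match t with
  | Leaf _ => true
  | Node b l r =>
      [&& cotree_labels_ok e l, cotree_labels_ok e r &
          all (fun x => all (fun y => e x y == b) (leaves r)) (leaves l)]
  end.

Definition binary_cotree (e : rel T) (t : btree) : Prop :=
  [/\ uniq (leaves t), (forall x, x \in leaves t) & cotree_labels_ok e t].

Definition colset (S : finType) (sigma : T -> S) (t : btree) : {set S} :=
  sigma @: [set x | x \in leaves t].

Fixpoint hc_wrt (S : finType) (sigma : T -> S) (t : btree) : bool :=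
  match t with
  | Leaf _ => true
  | Node b l r =>
      [&& hc_wrt sigma l, hc_wrt sigma r &
          if b then [disjoint colset sigma l & colset sigma r]
          else (colset sigma l :&: colset sigma r == colset sigma l)
               || (colset sigma l :&: colset sigma r == colset sigma r)]
  end.

Definition hc_coloring (S : finType) (e : rel T) (sigma : T -> S) : Prop :=
  [/\ proper_coloring e sigma, surjective_map sigma &
      exists t, binary_cotree e t /\ hc_wrt sigma t].

End Graphs.

(* Main.v *)
Require Import Defs.
From mathcomp Require Import all_boot.

Section Aux.
Variable T : finType.
Variable e : rel T.
Hypothesis e_sym : symmetric e.
Hypothesis e_irr : irreflexive e.

Definition clique (K : {set T}) := forall x y, x \in K -> y \in K -> x != y -> e x y.

Lemma colset_node (S : finType) (sigma : T -> S) b l r :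
  colset sigma (Node b l r) = colset sigma l :|: colset sigma r.
Proof.
rewrite /colset /= -imsetU.
have -> : [set x | x \in leaves l ++ leaves r] =
  [set x | x \in leaves l] :|: [set x | x \in leaves r].
  by apply/setP=> x; rewrite !inE mem_cat.
by [].
Qed.

Lemma clique_ex (S : finType) (sigma : T -> S) t :
  cotree_labels_ok e t -> hc_wrt sigma t ->
  exists K : {set T}, [/\ K \subset [set x | x \in leaves t], clique K &
     #|colset sigma t| <= #|K|].
Proof.
elim: t => [x|b l IHl r IHr] /=.
  move=> _ _; exists [set x]; split.
  - by apply/subsetP=> y; rewrite !inE.
  - by move=> y z; rewrite !inE => /eqP-> /eqP->; rewrite eqxx.
  - rewrite /colset cards1.
    have -> : [set y | y \in [:: x]] = [set x] by apply/setP=> y; rewrite !inE.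
    by rewrite imset_set1 cards1.
case/and3P=> okl okr /allP hlr /and3P [hl hr hb].
have [Kl [sKl cKl lKl]] := IHl okl hl.
have [Kr [sKr cKr lKr]] := IHr okr hr.
have subl : Kl \subset [set x | x \in leaves (Node b l r)].
  apply/subsetP=> x /(subsetP sKl); by rewrite !inE mem_cat => ->.
have subr : Kr \subset [set x | x \in leaves (Node b l r)].
  apply/subsetP=> x /(subsetP sKr); by rewrite !inE mem_cat => ->; rewrite orbT.
rewrite colset_node.
case: b hlr hb subl subr => hlr hb subl subr.
- have Elr : forall x y, x \in Kl -> y \in Kr -> e x y.
    move=> x y xK yK.
    have xl : x \in leaves l by move: (subsetP sKl x xK); rewrite inE.
    have yr : y \in leaves r by move: (subsetP sKr y yK); rewrite inE.
    by move: (hlr x xl) => /allP /(_ y yr) /eqP.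
  have dis : Kl :&: Kr = set0.
    apply/setP=> x; rewrite !inE; apply/negbTE/negP => /andP[xl xr].
    by move: (Elr x x xl xr); rewrite e_irr.
  exists (Kl :|: Kr); split.
  + by rewrite subUset subl subr.
  + move=> x y; rewrite !inE => /orP[xK|xK] /orP[yK|yK] nxy.
    * exact: cKl.
    * exact: Elr.
    * rewrite e_sym; exact: Elr.
    * exact: cKr.
  + rewrite (cardsU Kl Kr) dis cards0 subn0.
    apply: leq_trans (leq_card_setU _ _) _.
    exact: leq_add.
- case/orP: hb => /eqP h.
  + exists Kr; split => //.
    by rewrite (setUidPr (introT setIidPl h)).
  + exists Kl; split => //.
    by rewrite (setUidPl (introT setIidPr h)).
Qed.

End Aux.

Theorem theorem3 (T : finType) (e : rel T) (e_sym : symmetric e)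
  (e_irr : irreflexive e) (S : finType) (sigma : T -> S) :
  cograph e -> hc_coloring e sigma -> #|S| = chi e_irr.
Proof.
move=> _ [prop surj [t [[_ allt okt] hct]]].
have [K [_ cK lK]] := @clique_ex T e e_sym e_irr S sigma t okt hct.
have colS : colset sigma t = [set: S].
  apply/setP=> c; rewrite inE; have [x <-] := surj c.
  by apply: imset_f; rewrite inE.
rewrite colS cardsT in lK.
rewrite /chi; case: ex_minnP => m /existsP [f /forallP hf] minm.
apply/eqP; rewrite eqn_leq; apply/andP; split.
- apply: leq_trans lK _.
  have inj : {in K &, injective f}.
    move=> x y xK yK fxy; apply/eqP; apply/negPn/negP => nxy.
    by move: (hf x) => /forallP /(_ y) /implyP /(_ (cK x y xK yK nxy)); rewrite fxy eqxx.
  rewrite -(card_in_imset inj).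
  by apply: leq_trans (max_card _) _; rewrite card_ord.
- apply: minm; apply/existsP; exists [ffun x => enum_rank (sigma x)].
  apply/forallP=> x; apply/forallP=> y; apply/implyP=> exy; rewrite !ffunE.
  apply/negP=> /eqP /enum_rank_inj; exact: prop.
Qed.
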